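(* For a discrete memoryless channel $\mathcal W$ from a finite set $\mathcal X$ to a finite set $\mathcal Y$, $\lim_{r\to0^+}E_{\rm sp}(r,\mathcal W)=U(\mathcal W)$.
   Context: $D(P\|Q)=\sum_xP(x)\log\frac{P(x)}{Q(x)}$ ($0\log(0/q)=0$; $+\infty$ if $P\not\ll Q$); for $\alpha\in(0,1)$, $D_\alpha(P\|Q)=\frac1{\alpha-1}\log\sum_xP(x)^\alpha Q(x)^{1-\alpha}$. For $P_X\in\mathcal P(\mathcal X)$, $P_{XY}(x,y)=P_X(x)\mathcal W(y|x)$. For $r>0$, $E_{\rm sp}(r,\mathcal W)=\sup_{\alpha\in(0,1]}\max_{P_X}\min_{Q_Y}\frac{1-\alpha}{\alpha}\big(D_\alpha(P_{XY}\|P_X\times Q_Y)-r\big)$ (the $\alpha=1$ term being $0$). $U(\mathcal W)=\max_{P_X}\min_{Q_Y}D(P_X\times Q_Y\|P_{XY})$. *)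

(* Defs.v *)
From HB Require Import structures.
From mathcomp Require Import all_boot all_order all_algebra.
From mathcomp Require Import all_classical all_reals all_analysis.
Set Implicit Arguments. Unset Strict Implicit. Unset Printing Implicit Defensive.
Import Order.TTheory GRing.Theory Num.Theory.
Local Open Scope classical_set_scope.
Local Open Scope ring_scope.

Section Defs.
Variable R : realType.

Definition is_pmf (T : finType) (P : T -> R) : Prop :=
  (forall t, 0 <= P t) /\ \sum_(t : T) P t = 1.

Definition pmfs (T : finType) : set (T -> R) := [set P | is_pmf P].
Arguments pmfs T : clear implicits.

Definition KL (T : finType) (P Q : T -> R) : \bar R :=
  if [exists t, (0 < P t) && (Q t == 0)] then +oo%E
  else (\sum_(t : T) (if P t == 0 then 0 else P t * ln (P t / Q t)))%:E.

(* Renyi divergence of order a in (0,1); log 0 = -oo gives +oo *)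
Definition renyi (T : finType) (a : R) (P Q : T -> R) : \bar R :=
  let s := \sum_(t : T) (P t `^ a * Q t `^ (1 - a)) in
  if s == 0 then +oo%E else ((a - 1)^-1 * ln s)%:E.

Definition joint (X Y : finType) (PX : X -> R) (W : X -> Y -> R) : X * Y -> R :=
  fun xy => PX xy.1 * W xy.1 xy.2.

Definition prodd (X Y : finType) (PX : X -> R) (QY : Y -> R) : X * Y -> R :=
  fun xy => PX xy.1 * QY xy.2.

Definition Esp_term (X Y : finType) (W : X -> Y -> R) (r a : R) : \bar R :=
  ereal_sup [set ereal_inf
      [set (((1 - a) / a)%:E * (renyi a (joint PX W) (prodd PX QY) - r%:E))%E
       | QY in pmfs Y] | PX in pmfs X].

(* sphere-packing exponent: sup over a in (0,1], the a = 1 term being 0 *)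
Definition Esp (X Y : finType) (W : X -> Y -> R) (r : R) : \bar R :=
  ereal_sup ([set Esp_term W r a | a in `]0, 1[] `|` [set 0%E]).

Definition Uch (X Y : finType) (W : X -> Y -> R) : \bar R :=
  ereal_sup [set ereal_inf [set KL (prodd PX QY) (joint PX W) | QY in pmfs Y]
            | PX in pmfs X].

End Defs.
Arguments pmfs {R} T.

(* Main.v *)
Require Import Defs.
From HB Require Import structures.
From mathcomp Require Import all_boot all_order all_algebra.
From mathcomp Require Import all_classical all_reals all_analysis.
From mathcomp Require Import ring lra.
Import Order.TTheory GRing.Theory Num.Theory.
Import numFieldNormedType.Exports.
Local Open Scope classical_set_scope.
Local Open Scope ring_scope.

Section Basic.
Variable R : realType.

Lemma ln_le_sub1 {x : R} : 0 < x -> ln x <= x - 1.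
Proof.
move=> x0; have := expR_ge1Dx (ln x); rewrite lnK ?posrE // => h.
by rewrite lerBrDr addrC.
Qed.

Lemma jensen_ln (T : finType) (w z : T -> R) :
  (forall t, 0 <= w t) -> \sum_t w t = 1 ->
  (forall t, w t != 0 -> 0 < z t) ->
  0 < \sum_t w t * z t /\ \sum_t w t * ln (z t) <= ln (\sum_t w t * z t).
Proof.
move=> w0 w1 wz.
have nn : forall t, 0 <= w t * z t.
  move=> t; have [->|wt] := eqVneq (w t) 0; first by rewrite mul0r.
  by rewrite mulr_ge0 // ltW // wz.
have mpos : 0 < \sum_t w t * z t.
  have [t wt] : exists t, w t != 0.
    apply/existsP; apply: contraT; rewrite negb_exists => /forallP h.
    move: w1; rewrite big1 => [|t _]; last by apply/eqP; rewrite -[_ == _]negbK h.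
    by move/eqP; rewrite eq_sym oner_eq0.
  rewrite (bigD1 t) //= ltr_wpDr ?sumr_ge0 // mulr_gt0 ?wz //.
  by rewrite lt_neqAle eq_sym wt w0.
split => //.
set m := \sum_t w t * z t.
have -> : ln m = \sum_t (w t * ln m + w t * (z t / m - 1)).
  rewrite big_split /= -mulr_suml w1 mul1r.
  under eq_bigr do rewrite mulrBr mulr1 mulrA.
  by rewrite sumrB -mulr_suml w1 divff ?gt_eqF // subrr addr0.
apply: ler_sum => t _.
have [->|wt] := eqVneq (w t) 0; first by rewrite !mul0r addr0.
rewrite -mulrDr ler_wpM2l //.
have zt := wz t wt.
have := ln_le_sub1 (divr_gt0 zt mpos).
rewrite lnM ?posrE ?invr_gt0 // lnV ?posrE //.
by rewrite lerBlDr addrC.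
Qed.

Lemma young (x z a : R) : 0 <= x -> 0 <= z -> 0 < a < 1 ->
  x `^ (1 - a) * z `^ a <= (1 - a) * x + a * z.
Proof.
move=> x0 z0 /andP[a0 a1].
have a1' : 0 < 1 - a by rewrite subr_gt0.
move: x0; rewrite le_eqVlt => /predU1P[<-|x0].
  rewrite powR0 ?gt_eqF // mul0r mulr0 add0r mulr_ge0 // ltW //.
move: z0; rewrite le_eqVlt => /predU1P[<-|z0].
  rewrite powR0 ?gt_eqF // mulr0 mulr0 addr0 mulr_ge0 // ltW //.
set m := (1 - a) * x + a * z.
have mpos : 0 < m by rewrite addr_gt0 // mulr_gt0.
rewrite /powR !gt_eqF // -expRD -[m in _ <= m]lnK ?posrE // ler_expR.
have h1 := ln_le_sub1 (divr_gt0 x0 mpos).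
have h2 := ln_le_sub1 (divr_gt0 z0 mpos).
rewrite lnM ?posrE ?invr_gt0 // lnV ?posrE // in h1.
rewrite lnM ?posrE ?invr_gt0 // lnV ?posrE // in h2.
have e : (1 - a) * (x / m - 1) + a * (z / m - 1) = 0.
  have -> : (1 - a) * (x / m - 1) + a * (z / m - 1) = m / m - 1 by rewrite /m; ring.
  by rewrite divff ?gt_eqF // subrr.
have := lerD (ler_wpM2l (ltW a1') h1) (ler_wpM2l (ltW a0) h2).
rewrite e => h.
have -> : ln m = (1 - a) * (ln x - ln m) + a * (ln z - ln m) + ln m - ((1 - a) * (ln x - ln m) + a * (ln z - ln m) + ln m - ln m) by ring.
rewrite -subr_ge0.
have -> : (1 - a) * (ln x - ln m) + a * (ln z - ln m) + ln m -
  ((1 - a) * (ln x - ln m) + a * (ln z - ln m) + ln m - ln m) -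
  ((1 - a) * ln x + a * ln z) = - ((1 - a) * (ln x - ln m) + a * (ln z - ln m)) by ring.
by rewrite oppr_ge0.
Qed.

End Basic.

Section KLfacts.
Variable R : realType.
Variable T : finType.
Variables p q : T -> R.
Hypothesis pP : is_pmf p.
Hypothesis qP : is_pmf q.

Lemma KL_pos_of (hne : ~~ [exists t, (0 < p t) && (q t == 0)]) t :
  p t != 0 -> 0 < p t /\ 0 < q t.
Proof.
move=> pt; have p0 : 0 < p t by rewrite lt_neqAle eq_sym pt pP.1.
split => //; rewrite lt_neqAle qP.1 andbT eq_sym.
apply: contra hne => qt; apply/existsP; exists t; by rewrite p0.
Qed.

Lemma KLsum_eq (hne : ~~ [exists t, (0 < p t) && (q t == 0)]) :
  \sum_t (if p t == 0 then 0 else p t * ln (p t / q t)) =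
  - \sum_t p t * ln (if p t == 0 then 1 else q t / p t).
Proof.
rewrite -sumrN; apply: eq_bigr => t _.
case: eqP => [->|/eqP pt]; first by rewrite mul0r oppr0.
have [p0 q0] := KL_pos_of hne t pt.
by rewrite -invf_div lnV ?posrE ?divr_gt0 // mulrN.
Qed.

Lemma KL_ge0 : (0 <= KL p q)%E.
Proof.
rewrite /KL; case: ifPn => [_|hne]; first exact: leey.
rewrite lee_fin KLsum_eq // oppr_ge0.
set z := fun t => if p t == 0 then 1 else q t / p t.
have [_ J] := @jensen_ln R T p z pP.1 pP.2 (fun t pt =>
  ltac:(rewrite /z (negbTE pt); have [p0 q0] := KL_pos_of hne t pt; exact: divr_gt0)).
apply: (le_trans J); apply: ln_le0.
rewrite -qP.2; apply: ler_sum => t _; rewrite /z.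
case: eqP => [->|/eqP pt]; first by rewrite mul0r qP.1.
by rewrite mulrC divfK.
Qed.

Lemma renyi_le_KL (a : R) : 0 < a < 1 ->
  (((1 - a) / a)%:E * renyi a q p <= KL p q)%E.
Proof.
move=> /andP[a0 a1].
rewrite /KL; case: ifPn => [_|hne]; first exact: leey.
set z := fun t => if p t == 0 then 1 else (q t / p t) `^ a.
have [spos J] := @jensen_ln R T p z pP.1 pP.2 (fun t pt =>
  ltac:(rewrite /z (negbTE pt); have [p0 q0] := KL_pos_of hne t pt;
        exact/powR_gt0/divr_gt0)).
have es : \sum_t p t * z t = \sum_t q t `^ a * p t `^ (1 - a).
  apply: eq_bigr => t _; rewrite /z.
  case: eqP => [->|/eqP pt]; first by rewrite mul0r powR0 ?mulr0 // subr_eq0 gt_eqF.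
  have [p0 q0] := KL_pos_of hne t pt.
  rewrite /powR !gt_eqF ?divr_gt0 // lnM ?posrE ?invr_gt0 // lnV ?posrE //.
  rewrite -{1}(lnK (x:=p t)) ?posrE // -!expRD; congr expR; ring.
have el : \sum_t p t * ln (z t) = a * \sum_t p t * ln (if p t == 0 then 1 else q t / p t).
  rewrite mulr_sumr; apply: eq_bigr => t _; rewrite /z.
  case: eqP => [->|_]; first by rewrite !mul0r mulr0.
  by rewrite ln_powR mulrCA.
rewrite es in spos J; rewrite el in J.
rewrite /renyi gt_eqF // -EFinM lee_fin KLsum_eq //.
set S := \sum_t p t * _ in J *.
set s := \sum_t _ in spos J *.
have -> : (1 - a) / a * ((a - 1)^-1 * ln s) = - (ln s / a).
  have a10 : a - 1 != 0 by rewrite subr_eq0 lt_eqF.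
  field; rewrite a10 gt_eqF //.
rewrite lerN2 ler_pdivlMr // mulrC //.
Qed.

End KLfacts.

Section Chan.
Variable R : realType.
Variables X Y : finType.
Variable W : X -> Y -> R.
Hypothesis HW : forall x, is_pmf (W x).

Lemma W_ge0 x y : 0 <= W x y. Proof. exact: (HW x).1. Qed.

Lemma W_le1 x y : W x y <= 1.
Proof.
rewrite -(HW x).2 (bigD1 y) //= lerDl sumr_ge0 // => z _; exact: W_ge0.
Qed.

Lemma powR_le1 (w a : R) : 0 <= w <= 1 -> 0 <= a -> w `^ a <= 1.
Proof.
move=> /andP[w0 w1] a0; rewrite /powR; case: ifPn => _.
  by case: (a == 0).
by rewrite expR_le1 mulr_ge0_le0 // ln_le0.
Qed.

Lemma sum_pair (f : X * Y -> R) : \sum_t f t = \sum_x \sum_y f (x, y).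
Proof. by rewrite pair_big /=; apply: eq_bigr; case. Qed.

Lemma joint_pmf (P : X -> R) : is_pmf P -> is_pmf (joint P W).
Proof.
move=> [P0 P1]; split => [t|]; first by rewrite /joint mulr_ge0 // W_ge0.
rewrite sum_pair -P1; apply: eq_bigr => x _.
by rewrite /joint /= -mulr_sumr (HW x).2 mulr1.
Qed.

Lemma prodd_pmf (P : X -> R) (Q : Y -> R) : is_pmf P -> is_pmf Q -> is_pmf (prodd P Q).
Proof.
move=> [P0 P1] [Q0 Q1]; split => [t|]; first by rewrite /prodd mulr_ge0.
rewrite sum_pair -P1; apply: eq_bigr => x _.
by rewrite /prodd /= -mulr_sumr Q1 mulr1.
Qed.

Definition bw (P : X -> R) y := [pick x | (0 < P x) && (W x y == 0)].

Definition Hterm (P : X -> R) (a : R) y :=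
  if bw P y is Some x then a / P x
  else expR (\sum_x P x * (ln (W x y) / (1 - a * ln (W x y)))).

Definition Hf P a := \sum_y Hterm P a y.

Lemma powR_inv_bound {h a : R} : 0 <= h -> 0 < a -> h `^ (a^-1) <= expR ((h - 1) / a).
Proof.
rewrite le_eqVlt => /predU1P[<- a0|h0 a0].
  by rewrite powR0 ?invr_eq0 ?gt_eqF // expR_ge0.
rewrite /powR gt_eqF // ler_expR mulrC ler_pM2r ?invr_gt0 //.
exact: ln_le_sub1.
Qed.

Lemma Hterm_bound (P : X -> R) a y : is_pmf P -> 0 < a < 1 ->
  (\sum_x P x * W x y `^ a) `^ (a^-1) <= Hterm P a y.
Proof.
move=> [P0 P1] /andP[a0 a1].
have h0 : 0 <= \sum_x P x * W x y `^ a by rewrite sumr_ge0 // => x _; rewrite mulr_ge0 // powR_ge0.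
have := powR_inv_bound h0 a0. move=> HH. apply: (le_trans HH).
rewrite /Hterm /bw; case: pickP => [x0 /andP[p0 /eqP w0]|hn].
  have hle : \sum_x P x * W x y `^ a <= 1 - P x0.
    rewrite -P1 (bigD1 x0) //= [in leRHS](bigD1 x0) //= w0 powR0 ?gt_eqF // mulr0 add0r.
    rewrite addrAC subrr add0r; apply: ler_sum => x _.
    by rewrite -[leRHS]mulr1 ler_wpM2l // powR_le1 ?W_ge0 ?W_le1 ?ltW.
  apply: (@le_trans _ _ (expR (- P x0 / a))).
    rewrite ler_expR ler_pM2r ?invr_gt0 //; lra.
  rewrite mulNr expRN -[a / P x0]invf_div lef_pV2 ?posrE ?expR_gt0 ?divr_gt0 //.
  by apply: le_trans (expR_ge1Dx _); rewrite lerDr.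
rewrite ler_expR.
have -> : (\sum_x P x * W x y `^ a - 1) / a = \sum_x P x * ((W x y `^ a - 1) / a).
  rewrite -[X in (_ - X) / a]P1 -sumrB mulr_suml; apply: eq_bigr => x _.
  by rewrite mulrA mulrBr mulr1.
apply: ler_sum => x _.
have [->|px] := eqVneq (P x) 0; first by rewrite !mul0r.
apply: ler_wpM2l => //.
have wpos : 0 < W x y.
  rewrite lt_neqAle W_ge0 andbT eq_sym; apply/negP => /eqP wx.
  have := hn x; rewrite /= wx eqxx andbT => /negbT; rewrite -leNgt => px0.
  by move: px; rewrite eq_le px0 P0.
set u := ln (W x y).
have u0 : u <= 0 by rewrite /u ln_le0 // W_le1.
set d := 1 - a * u.
have d1 : 1 <= d by rewrite /d; have := mulr_ge0_le0 (ltW a0) u0; lra.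
have d0 : 0 < d by apply: lt_le_trans d1.
have Ed : W x y `^ a * d <= 1.
  rewrite /powR gt_eqF // -/u.
  have := expR_ge1Dx (- (a * u)); rewrite -/(1 - a * u) -/d => hd.
  apply: (le_trans (ler_wpM2l (expR_ge0 _) hd)).
  by rewrite -expRD subrr expR0.
rewrite -subr_le0.
have -> : (W x y `^ a - 1) / a - u / d = (W x y `^ a * d - 1) / (a * d).
  rewrite /d; field; apply/andP; split; last exact: lt0r_neq0.
  by move: d0; rewrite /d => /lt0r_neq0.
by rewrite mulr_le0_ge0 ?subr_le0 // invr_ge0 mulr_ge0 // ltW.
Qed.


Lemma Hterm_pos (P : X -> R) a y : is_pmf P -> 0 < a -> 0 < Hterm P a y.
Proof.
move=> PP a0; rewrite /Hterm /bw; case: pickP => [x /andP[p0 _]|_].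
  exact: divr_gt0.
exact: expR_gt0.
Qed.

Lemma powR_inv (v a : R) : 0 < v -> (v^-1) `^ a = (v `^ a)^-1.
Proof.
by move=> v0; rewrite /powR !gt_eqF ?invr_gt0 // lnV ?posrE // mulrN expRN.
Qed.

Lemma renyi_lower (P : X -> R) (Q : Y -> R) a : is_pmf P -> is_pmf Q -> 0 < a < 1 ->
  0 < Hf P a /\
  ((- ln (Hf P a))%:E <= ((1 - a) / a)%:E * renyi a (joint P W) (prodd P Q))%E.
Proof.
move=> PP QP /andP[a0 a1].
have a1' : 0 < 1 - a by rewrite subr_gt0.
have Hpos : 0 < Hf P a.
  have [y qy] : exists y, Q y != 0.
    apply/existsP; apply: contraT; rewrite negb_exists => /forallP h.
    move: QP.2; rewrite big1 => [|t _]; last by apply/eqP; rewrite -[_ == _]negbK h.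
    by move/eqP; rewrite eq_sym oner_eq0.
  rewrite /Hf (bigD1 y) //= ltr_pwDl ?Hterm_pos // sumr_ge0 // => z _.
  exact/ltW/Hterm_pos.
split => //.
set H := Hf P a.
rewrite /renyi.
set s := \sum_t _.
have es : s = \sum_y Q y `^ (1 - a) * \sum_x P x * W x y `^ a.
  rewrite /s sum_pair exchange_big /=; apply: eq_bigr => y _.
  rewrite mulr_sumr; apply: eq_bigr => x _.
  rewrite /joint /prodd /= powRM ?W_ge0 ?PP.1 // powRM ?PP.1 ?QP.1 //.
  rewrite mulrACA -powRD; last by rewrite subrKC oner_eq0.
  rewrite subrKC powRr1 ?PP.1 //; ring.
case: ifPn => [_|s0].
  by rewrite gt0_muley ?leey // lte_fin divr_gt0.
have spos : 0 < s.
  rewrite lt_neqAle eq_sym s0 /= es sumr_ge0 // => y _.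
  by rewrite mulr_ge0 ?powR_ge0 // sumr_ge0 // => x _; rewrite mulr_ge0 ?powR_ge0 ?PP.1.
have sH : s <= H `^ a.
  rewrite es.
  set h := fun y => \sum_x P x * W x y `^ a.
  have h0 : forall y, 0 <= h y.
    by move=> y; rewrite sumr_ge0 // => x _; rewrite mulr_ge0 ?powR_ge0 ?PP.1.
  have Ha : 0 < H `^ a by rewrite powR_gt0.
  apply: (@le_trans _ _ (\sum_y H `^ a * ((1 - a) * Q y + a * (h y `^ a^-1 / H)))).
    apply: ler_sum => y _.
    have hy : h y = H `^ a * (h y `^ a^-1 / H) `^ a.
      rewrite powRM ?powR_ge0 ?invr_ge0 ?ltW // powR_inv // -powRrM mulVf ?gt_eqF //.
      rewrite powRr1 ?h0 // mulrCA divff ?gt_eqF // mulr1 //.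
    rewrite [X in _ * X <= _]hy mulrCA; apply: ler_wpM2l; first exact: ltW.
    by apply: young; rewrite ?QP.1 ?divr_ge0 ?powR_ge0 ?ltW ?a0.
  rewrite -mulr_sumr -[leRHS]mulr1; apply: ler_wpM2l; first exact: ltW.
  rewrite big_split /=.
  rewrite -!mulr_sumr QP.2 mulr1.
  have : \sum_y h y `^ a^-1 / H <= 1.
    rewrite -mulr_suml ler_pdivrMr // mul1r; apply: ler_sum => y _.
    by apply: Hterm_bound => //; rewrite a0 a1.
  move=> hs; have := ler_wpM2l (ltW a0) hs; lra.
rewrite -EFinM lee_fin.
have -> : (1 - a) / a * ((a - 1)^-1 * ln s) = - (ln s / a).
  have a10 : a - 1 != 0 by rewrite subr_eq0 lt_eqF.
  field; rewrite a10 lt0r_neq0 //.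
rewrite lerN2 ler_pdivrMr // mulrC -ln_powR.
by rewrite ler_ln ?posrE ?powR_gt0.
Qed.

Definition Kp (P : X -> R) : \bar R :=
  ereal_inf [set KL (prodd P Q) (joint P W) | Q in pmfs Y].

Lemma Hterm0 (P : X -> R) y : Hterm P 0 y =
  if bw P y is Some _ then 0 else expR (\sum_x P x * ln (W x y)).
Proof.
rewrite /Hterm; case: (bw P y) => [x|]; first by rewrite mul0r.
by congr expR; apply: eq_bigr => x _; rewrite mul0r subr0 divr1.
Qed.

Lemma Kp_upper {P : X -> R} {M : R} : is_pmf P -> (M%:E < Kp P)%E -> Hf P 0 < expR (- M).
Proof.
move=> PP hM.
set F := Hf P 0.
have T0 : forall y, 0 <= Hterm P 0 y.
  by move=> y; rewrite Hterm0; case: (bw P y) => [_|]; rewrite ?expR_ge0.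
have F0 : 0 <= F by rewrite sumr_ge0.
move: F0; rewrite le_eqVlt => /predU1P[<-|Fpos]; first exact: expR_gt0.
set Qs := fun y => Hterm P 0 y / F.
have QsP : is_pmf Qs.
  split => [y|]; first by rewrite /Qs divr_ge0 // ltW.
  by rewrite /Qs -mulr_suml divff ?gt_eqF.
have hKL : KL (prodd P Qs) (joint P W) = (- ln F)%:E.
  rewrite /KL ifF; last first.
    apply/negbTE/negP => /existsP [[x y] /andP [h1 /eqP h2]].
    move: h1 h2; rewrite /prodd /joint /Qs /= Hterm0 /bw.
    case: pickP => [x' _|hn]; first by rewrite mul0r mulr0 ltxx.
    move=> h1 /eqP; rewrite mulf_eq0 => /orP[/eqP px|/eqP wx].
      by move: h1; rewrite px mul0r ltxx.
    have := hn x; rewrite /= wx eqxx andbT => /negbT; rewrite -leNgt => px0.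
    have pz : P x = 0 by apply: le_anti; rewrite px0 PP.1.
    by move: h1; rewrite pz mul0r ltxx.
  congr EFin.
  rewrite sum_pair exchange_big /=.
  have -> : - ln F = \sum_y - (Qs y * ln F).
    by rewrite sumrN -mulr_suml QsP.2 mul1r.
  apply: eq_bigr => y _.
  rewrite /prodd /joint /=.
  case hb: (bw P y) => [x'|].
    have Q0 : Qs y = 0 by rewrite /Qs Hterm0 hb mul0r.
    rewrite Q0 mul0r oppr0 big1 // => x _; by rewrite mulr0 eqxx.
  set L := \sum_x P x * ln (W x y).
  have Qe : Qs y = expR L / F by rewrite /Qs Hterm0 hb.
  have Qpos : 0 < Qs y by rewrite Qe divr_gt0 ?expR_gt0.
  have hn : forall x, 0 < P x -> 0 < W x y.
    move: hb; rewrite /bw; case: pickP => [//|hn _ x px].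
    rewrite lt_neqAle W_ge0 andbT eq_sym; apply/negP => /eqP wx.
    by have := hn x; rewrite /= wx eqxx andbT px.
  transitivity (\sum_x P x * (Qs y * (L - ln F - ln (W x y)))).
    apply: eq_bigr => x _.
    have [->|px] := eqVneq (P x) 0; first by rewrite !mul0r eqxx.
    have p0 : 0 < P x by rewrite lt_neqAle eq_sym px PP.1.
    have w0 := hn x p0.
    rewrite mulf_eq0 (negbTE px) (gt_eqF Qpos) /=.
    have -> : P x * Qs y / (P x * W x y) = Qs y / W x y.
      by rewrite invfM mulrACA divff // mul1r.
    rewrite lnM ?posrE ?invr_gt0 // lnV ?posrE // Qe lnM ?posrE ?invr_gt0 ?expR_gt0 //.
    rewrite lnV ?posrE // expRK; ring.
  have -> : \sum_x P x * (Qs y * (L - ln F - ln (W x y))) =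
     \sum_x (Qs y * (L - ln F) * P x - Qs y * (P x * ln (W x y))).
    by apply: eq_bigr => x _; ring.
  by rewrite sumrB -!mulr_sumr PP.2 -/L; ring.
have : (Kp P <= (- ln F)%:E)%E.
  rewrite -hKL; apply: ereal_inf_lbound; by exists Qs.
move=> /(lt_le_trans hM); rewrite lte_fin => hlt.
by rewrite -(lnK (x:=F)) ?posrE // ltr_expR ltrNr.
Qed.

Lemma sum_cvg0 (I : Type) (r : seq I) (f : I -> R -> R) (l : I -> R) :
  (forall i, f i x @[x --> (0:R)] --> l i) ->
  (\sum_(i <- r) f i x) @[x --> (0:R)] --> \sum_(i <- r) l i.
Proof.
move=> h; elim: r => [|i r IH].
  under eq_fun do rewrite big_nil; rewrite big_nil; exact: cvg_cst.
under eq_fun do rewrite big_cons; rewrite big_cons.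
exact: cvgD.
Qed.

Lemma Hf_cont (P : X -> R) : Hf P a @[a --> (0:R)] --> Hf P 0.
Proof.
apply: sum_cvg0 => y; rewrite /Hterm.
case: (bw P y) => [x|].
  exact: cvgMr_tmp cvg_id.
apply: continuous_cvg; first exact: continuous_expR.
apply: sum_cvg0 => x; apply: cvgMl_tmp.
apply: cvgMl_tmp; apply: cvgV; first by rewrite mul0r subr0 oner_neq0.
apply: cvgB; first exact: cvg_cst.
exact: cvgMr_tmp cvg_id.
Qed.

Lemma Hf_small {P : X -> R} {b} : Hf P 0 < b -> exists a, 0 < a < 1 /\ Hf P a < b.
Proof.
move=> hb; have := cvgr_lt _ (Hf_cont P) b hb.
move=> H; have [e /= e0 he] := iffLR (nbhs_ballP _ _) (H _).
exists (Num.min (e / 2) (1 / 2)).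
have m0 : 0 < Num.min (e / 2) (1 / 2) by rewrite lt_min !divr_gt0.
have m1 : Num.min (e / 2) (1 / 2) < 1.
  by rewrite gt_min; apply/orP; right; lra.
split; first by rewrite m0 m1.
apply: he; rewrite /ball /= sub0r normrN gtr0_norm //.
by rewrite gt_min; apply/orP; left; lra.
Qed.

Lemma ecmul_sub_mono (c r1 r2 : R) (D : \bar R) : 0 <= c -> r1 <= r2 ->
  (c%:E * (D - r2%:E) <= c%:E * (D - r1%:E))%E.
Proof.
move=> c0 r12; case: D => [d||] //=.
by rewrite -!EFinB -!EFinM lee_fin ler_wpM2l // lerB.
Qed.

Lemma ecmul_sub_lb (c r k : R) (D : \bar R) : 0 < c ->
  (k%:E <= c%:E * D)%E -> ((k - c * r)%:E <= c%:E * (D - r%:E))%E.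
Proof.
move=> c0; case: D => [d||] h.
- by move: h; rewrite -!EFinB -!EFinM !lee_fin mulrBr => h; rewrite lerB.
- have -> : (+oo - r%:E = +oo :> \bar R)%E by [].
  by rewrite gt0_muley ?lte_fin // leey.
- by move: h; rewrite gt0_muleNy ?lte_fin // leeNy_eq.
Qed.

Lemma Esp_noninc : {in `]0, +oo[ &, nonincreasing_fun (Esp W)}.
Proof.
move=> r1 r2 _ _ r12.
apply: ge_ereal_sup => z [[a ha <-]| ->]; last first.
  by apply: ereal_sup_ubound; right.
apply: (@le_trans _ _ (Esp_term W r1 a)); last by apply: ereal_sup_ubound; left; exists a.
apply: ge_ereal_sup => _ [P PP <-].
apply: le_trans; last by apply: ereal_sup_ubound; exists P.
apply: le_ereal_inf_tmp => _ [Q QP <-].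
apply: le_trans; first by apply: ereal_inf_lbound; exists Q.
apply: ecmul_sub_mono => //.
move: ha; rewrite /= in_itv /= => /andP[a0 a1].
by rewrite divr_ge0 // ?subr_ge0 ltW.
Qed.

Lemma Kp_ge0 {P : X -> R} : is_pmf P -> (0 <= Kp P)%E.
Proof.
move=> PP; apply: le_ereal_inf_tmp => _ [Q QP <-].
apply: KL_ge0; [exact: prodd_pmf | exact: joint_pmf].
Qed.

Lemma U_ge0 (x0 : X) : (0 <= Uch W)%E.
Proof.
set P0 := fun x : X => ((x == x0)%:R : R).
have PP : is_pmf P0.
  split => [x|]; first by rewrite /P0; case: (x == x0).
  rewrite (bigD1 x0) //= /P0 eqxx big1 ?addr0 // => x /negbTE ->.
  by [].
apply: (le_trans (Kp_ge0 PP)).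
by apply: ereal_sup_ubound; exists P0.
Qed.

Lemma Esp_le_U (x0 : X) r : 0 < r -> (Esp W r <= Uch W)%E.
Proof.
move=> r0; apply: ge_ereal_sup => z [[a ha <-]| ->]; last exact: U_ge0.
move: ha; rewrite /= in_itv /= => /andP[a0 a1].
apply: ge_ereal_sup => _ [P PP <-].
apply: (@le_trans _ _ (Kp P)); last by apply: ereal_sup_ubound; exists P.
apply: le_ereal_inf_tmp => _ [Q QP <-].
apply: le_trans; first by apply: ereal_inf_lbound; exists Q.
have c0 : 0 <= (1 - a) / a by rewrite divr_ge0 // ?subr_ge0 ltW.
apply: (le_trans (@ecmul_sub_mono _ 0 r _ c0 (ltW r0))).
rewrite sube0.
apply: renyi_le_KL; [exact: prodd_pmf | exact: joint_pmf | ].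
by rewrite a0 a1.
Qed.

Lemma Esp_big (M : R) : (M%:E < Uch W)%E -> exists r, 0 < r /\ (M%:E < Esp W r)%E.
Proof.
move=> /ereal_sup_gt [_ [P PP <-] hM].
have hF := Kp_upper PP hM.
have [a [/andP[a0 a1] ha]] := Hf_small hF.
have [x _] : exists x : X, True.
  case: (pickP (fun x : X => P x != 0)) => [x _|hn]; first by exists x.
  move: PP.2; rewrite big1 => [|t _]; last by apply/eqP; rewrite -[_ == _]negbK hn.
  by move/eqP; rewrite eq_sym oner_eq0.
have a01 : 0 < a < 1 by rewrite a0 a1.
have Hpos := (renyi_lower P (W x) a PP (HW x) a01).1.
set H := Hf P a in ha Hpos.
have lnH : M < - ln H.
  by rewrite ltrNr -ltr_expR lnK ?posrE.
set d := - ln H - M.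
have d0 : 0 < d by rewrite /d subr_gt0.
set c := (1 - a) / a.
have c0 : 0 < c by rewrite /c divr_gt0 // subr_gt0.
exists (d / 2 / c); split; first by apply: divr_gt0 => //; apply: divr_gt0.
apply: (@lt_le_trans _ _ (M + d / 2)%:E); first by rewrite lte_fin ltrDl divr_gt0.
apply: (@le_trans _ _ (Esp_term W (d / 2 / c) a)); last first.
  by apply: ereal_sup_ubound; left; exists a => //=; rewrite in_itv /= a0 a1.
apply: le_trans; last by apply: ereal_sup_ubound; exists P.
apply: le_ereal_inf_tmp => _ [Q QP <-].
have -> : M + d / 2 = - ln H - c * (d / 2 / c).
  by rewrite /d; field; rewrite lt0r_neq0.
apply: ecmul_sub_lb => //.
exact: (renyi_lower P Q a PP QP a01).2.
Qed.


End Chan.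

Theorem mainTheorem5 (R : realType) (X Y : finType) (HX : (0 < #|X|)%N)
  (W : X -> Y -> R) (HW : forall x, is_pmf (W x)) :
  Esp W r @[r --> (0:R)^'+] --> Uch W.
Proof.
case/card_gt0P: HX => x0 _.
have hS := @nonincreasing_at_right_cvge R (Esp W) 0 (BInfty _ false) isT (@Esp_noninc R X Y W).
set S := ereal_sup _ in hS.
suff -> : Uch W = S by [].
have ub : forall r, 0 < r -> (Esp W r <= S)%E.
  by move=> r r0; apply: ereal_sup_ubound; exists r => //=; rewrite in_itv /= r0.
apply/le_anti/andP; split; last first.
  apply: ge_ereal_sup => _ [r hr <-]; apply: (@Esp_le_U R X Y W HW x0).
  by move: hr; rewrite /= in_itv /= andbT.
have S0 : (0 <= S)%E.
  by apply: le_trans (ub 1 ltr01); apply: ereal_sup_ubound; right.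
rewrite leNgt; apply/negP => hlt.
clear hS; clearbody S; move: S ub S0 hlt => [s||] ub S0 hlt //.
- have [r [r0 hr]] := @Esp_big R X Y W HW s hlt.
  by move: (lt_le_trans hr (ub r r0)); rewrite ltxx.
- by rewrite ltNge leey in hlt.
Qed.
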